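(* Fix $\vartheta\in\mathbb{C}$, let $r_1,r_2$ be the two roots (with multiplicity) of $\vartheta-(\mathtt{h}+1)^2$, let $\omega=3+\max(\mathrm{Re}\, r_1,\mathrm{Re}\, r_2)$ and $\mathbb{C}_\omega=\{z\in\mathbb{C}: \mathrm{Re}\,z\in[\omega,\omega+2)\}$. Let $u=c\prod_{t\in\mathbb{C}_\omega}(\mathtt{h}-t)^{\mathtt{m}(t)}\in\mathbb{C}(\mathtt{h})^\times$ with $c\in\mathbb{C}^\times$ and $\mathtt{m}:\mathbb{C}_\omega\to\mathbb{Z}$ of finite support. Then $L_u\cap\mathbb{C}[\mathtt{h}]=\mathbb{C}[\mathtt{h}]$, i.e. the monic generator of the ideal $L_u\cap\mathbb{C}[\mathtt{h}]$ of $\mathbb{C}[\mathtt{h}]$ is $1$, and hence $\mathbb{C}[\mathtt{h}]\subset L_u$.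
   Context: $\mathfrak{g}=\mathfrak{sl}_2(\mathbb{C})$ with basis $\mathtt{e},\mathtt{f},\mathtt{h}$, $[\mathtt{h},\mathtt{e}]=2\mathtt{e}$, $[\mathtt{h},\mathtt{f}]=-2\mathtt{f}$, $[\mathtt{e},\mathtt{f}]=\mathtt{h}$; Casimir element $\mathtt{c}=(\mathtt{h}+1)^2+4\mathtt{f}\mathtt{e}$; $U_\vartheta=U(\mathfrak{g})/U(\mathfrak{g})(\mathtt{c}-\vartheta)$. Let $\Bbbk=\mathbb{C}(\mathtt{h})$, $\sigma$ the automorphism of $\Bbbk$ fixing $\mathbb{C}$ with $\sigma(\mathtt{h})=\mathtt{h}-2$, and $R=\Bbbk[x,x^{-1},\sigma]$ (skew Laurent polynomials: $xr=\sigma(r)x$ for $r\in\Bbbk$). The assignment $\mathtt{e}\mapsto x$, $\mathtt{f}\mapsto\frac{\vartheta-(\mathtt{h}+1)^2}{4}x^{-1}$, $\mathtt{h}\mapsto\mathtt{h}$ gives an injective algebra homomorphism $U_\vartheta\to R$. For $u\in\Bbbk^\times$, $N_u$ is $\Bbbk$ with the $R$-module structure where $\Bbbk$ acts by multiplication and $x\cdot b=\sigma(b)u$; thus as a $U_\vartheta$-module, $\mathtt{h}$ acts by multiplication, $\mathtt{e}\cdot b=\sigma(b)u$ and $\mathtt{f}\cdot b=\frac{\vartheta-(\mathtt{h}+1)^2}{4}\cdot\frac{\sigma^{-1}(b)}{\sigma^{-1}(u)}$. It is known that $N_u$, viewed as a $U_\vartheta$-module, has a unique simple submodule; this is denoted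 $L_u$. *)

(* Defs.v *)
From mathcomp Require Import all_boot all_algebra fraction generic_quotient.
From mathcomp Require Import complex reals.
Set Implicit Arguments. Unset Strict Implicit. Unset Printing Implicit Defensive.
Import GRing.Theory Num.Theory.
Local Open Scope ring_scope.

(* The complex numbers are R[i] for a real field R : realType.
   The field k = C(h) is {fraction {poly R[i]}}, with h = 'X%:F. *)
Notation Kf R := {fraction {poly R[i]}}.
Notation "x %:F" := (@FracField.tofrac _ x) : ring_scope.

Definition ReC (R : realType) (z : R[i]) : R := complex.Re z.

Definition shiftK (R : realType) (a : R[i]) (x : Kf R) : Kf R :=
  let r := repr x in
  ((\n_r) \Po ('X + a%:P))%:F / ((\d_r) \Po ('X + a%:P))%:F.

Definition sigmaK (R : realType) (x : Kf R) : Kf R := shiftK (- 2) x.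
Definition sigmaKinv (R : realType) (x : Kf R) : Kf R := shiftK 2 x.

Definition act_h (R : realType) (b : Kf R) : Kf R := ('X)%:F * b.
Definition act_e (R : realType) (u b : Kf R) : Kf R := sigmaK b * u.
Definition act_f (R : realType) (theta : R[i]) (u b : Kf R) : Kf R :=
  ((theta%:P - ('X + 1) ^+ 2)%:F / 4) * (sigmaKinv b / sigmaKinv u).

(* S is a U_theta-submodule of N_u: a C-subspace of C(h) stable under h, e, f
   (these generate U_theta as an algebra). *)
Definition is_submodule (R : realType) (theta : R[i]) (u : Kf R)
    (S : Kf R -> Prop) : Prop :=
  [/\ S 0,
      (forall x y, S x -> S y -> S (x + y)),
      (forall (c : R[i]) x, S x -> S ((c%:P)%:F * x)) &
      [/\ (forall x, S x -> S (act_h x)),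
           (forall x, S x -> S (act_e u x)) &
           (forall x, S x -> S (act_f theta u x))]].

Definition is_simple_submodule (R : realType) (theta : R[i]) (u : Kf R)
    (S : Kf R -> Prop) : Prop :=
  [/\ is_submodule theta u S,
      (exists x, S x /\ x <> 0) &
      (forall T : Kf R -> Prop, is_submodule theta u T ->
         (forall x, T x -> S x) ->
         (forall x, T x -> x = 0) \/ (forall x, S x -> T x))].

(* Main.v *)
Require Import Defs.
From mathcomp Require Import all_boot all_algebra fraction generic_quotient.
From mathcomp Require Import complex reals.
From mathcomp Require Import order lra ring.
Import Order.TTheory GRing.Theory Num.Theory.
Local Open Scope ring_scope.

Lemma field_aux (F : fieldType) (a b d n f : F) : f != 0 -> n != 0 -> d != 0 ->
  a * b * d = f * n * (a / f * (b / (n / d))).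
Proof. move=> f0 n0 d0. field. by rewrite f0 n0 d0. Qed.

Section Helpers.
Local Open Scope quotient_scope.
Lemma repr_frac (R : idomainType) (x : {fraction R}) :
  x * (\d_(repr x))%:F = (\n_(repr x))%:F.
Proof.
rewrite -[x in x * _]reprK.
set r := repr x.
unlock FracField.tofrac.
rewrite -[GRing.mul _ _]/(FracField.mul _ _).
rewrite -FracField.pi_mul.
apply/eqmodP => /=.
rewrite FracField.equivfE /FracField.mulf /=.
rewrite !numden_Ratio ?oner_neq0 ?mulf_neq0 ?denom_ratioP ?oner_neq0 //.
by rewrite !mulr1 mulrC.
Qed.
End Helpers.

Section Main.
Variable R : realType.
Local Notation C := (R[i]).
Local Notation K := (Kf R).

Lemma comp_shift_neq0 (a : C) (p : {poly C}) : p != 0 -> p \Po ('X + a%:P) != 0.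
Proof. by rewrite comp_poly2_eq0 // size_XaddC. Qed.

Lemma shiftK_char (a : C) (x : K) (n d : {poly C}) : d != 0 -> x * d%:F = n%:F ->
  shiftK a x = (n \Po ('X + a%:P))%:F / (d \Po ('X + a%:P))%:F.
Proof.
move=> d0 hx; rewrite /shiftK.
have hr := @repr_frac _ x.
set r := repr x in hr *.
have dr0 : \d_r != 0 by exact: denom_ratioP.
have e : \n_r * d = n * \d_r.
  by apply/eqP; rewrite -tofrac_eq !tofracM -hr -hx mulrAC.
have e' : (\n_r \Po ('X + a%:P)) * (d \Po ('X + a%:P)) =
          (n \Po ('X + a%:P)) * (\d_r \Po ('X + a%:P)).
  by rewrite -!comp_polyM e.
by apply/eqP; rewrite eqr_div ?tofrac_eq0 ?comp_shift_neq0 // -!tofracM e'.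
Qed.

Lemma shiftK_poly (a : C) (p : {poly C}) : shiftK a p%:F = (p \Po ('X + a%:P))%:F.
Proof.
rewrite (@shiftK_char a _ p 1); last by rewrite tofrac1 mulr1.
  by rewrite (comp_poly_multiplicative _).2 tofrac1 divr1.
exact: oner_neq0.
Qed.

Definition posn (z : int) : nat := match z with Posz n => n | Negz _ => 0%N end.
Definition negn (z : int) : nat := match z with Posz _ => 0%N | Negz n => n.+1 end.
Definition Npol (c : C) (ts : seq C) (m : C -> int) : {poly C} :=
  c%:P * \prod_(t <- ts) ('X - t%:P) ^+ posn (m t).
Definition Dpol (ts : seq C) (m : C -> int) : {poly C} :=
  \prod_(t <- ts) ('X - t%:P) ^+ negn (m t).

Lemma expz_split (F : fieldType) (y : F) (z : int) : y != 0 ->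
  y ^ z * y ^+ negn z = y ^+ posn z.
Proof.
move=> hy; case: z => n.
  by rewrite expr0 mulr1.
change ((y ^+ n.+1)^-1 * y ^+ n.+1 = y ^+ 0).
by rewrite mulVf ?expr0 // expf_neq0.
Qed.

Lemma u_char c ts m :
  (c%:P)%:F * \prod_(t <- ts) (('X - t%:P)%:F) ^ (m t) * (Dpol ts m)%:F
  = (Npol c ts m)%:F :> K.
Proof.
rewrite /Npol /Dpol tofracM !rmorph_prod -mulrA -big_split.
congr (_ * _); apply: eq_bigr => t _.
rewrite !rmorphXn.
apply: expz_split.
by rewrite tofrac_eq0 polyXsubC_eq0.
Qed.
Lemma prod_root (ts : seq C) (k : C -> nat) (a : C) :
  (\prod_(t <- ts) ('X - t%:P) ^+ k t).[a] = 0 -> a \in ts.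
Proof.
rewrite horner_prod => /eqP; rewrite prodf_seq_eq0 => /hasP [t tin].
by rewrite /= horner_exp hornerXsubC expf_eq0 subr_eq0 => /andP [_ /eqP ->].
Qed.

Lemma prod_neq0 (ts : seq C) (k : C -> nat) :
  \prod_(t <- ts) ('X - t%:P) ^+ k t != 0.
Proof.
rewrite prodf_seq_neq0; apply/allP => t _ /=.
by rewrite expf_neq0 // polyXsubC_eq0.
Qed.

Lemma exists_min (f : C -> R) (x : C) (s : seq C) :
  exists2 a, a \in x :: s & forall b, b \in x :: s -> f a <= f b.
Proof.
elim: s x => [|y s IH] x.
  by exists x => [|b]; rewrite ?mem_seq1 // => /eqP ->.
have [a ain amin] := IH y.
case: (lerP (f x) (f a)) => h.
  exists x; first by rewrite inE eqxx.
  move=> b; rewrite inE => /orP [/eqP -> //| /amin]; exact: le_trans h.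
exists a; first by rewrite inE ain orbT.
by move=> b; rewrite inE => /orP [/eqP ->| /amin//]; exact: ltW.
Qed.

Lemma ReC_add (a b : C) : ReC (a + b) = ReC a + ReC b.
Proof. by case: a; case: b. Qed.

Lemma ReC_2 : ReC (2 : C) = 2.
Proof. by []. Qed.

Lemma ReC_m2 : ReC (-2 : C) = -2.
Proof. by []. Qed.

End Main.
Arguments comp_shift_neq0 {R}. Arguments shiftK_char {R}. Arguments shiftK_poly {R}.
Arguments Npol {R}. Arguments Dpol {R}. Arguments u_char {R}. Arguments prod_root {R}.
Arguments prod_neq0 {R}. Arguments exists_min {R}. Arguments ReC_add {R}. Arguments ReC_2 {R}. Arguments ReC_m2 {R}.

Lemma horner_shift (R : realType) (p : {poly R[i]}) (a z : R[i]) : (p \Po ('X + a%:P)).[z] = p.[z + a].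
Proof. by rewrite horner_comp hornerD hornerX hornerC. Qed.

Theorem proposition8 (R : realType) (theta r1 r2 : R[i])
  (Hroots : theta%:P - ('X + 1) ^+ 2 = - (('X - r1%:P) * ('X - r2%:P)))
  (c : R[i]) (Hc : c != 0) (ts : seq R[i]) (m : R[i] -> int)
  (Hts : forall t, t \in ts ->
     3 + Num.max (ReC r1) (ReC r2) <= ReC t < 3 + Num.max (ReC r1) (ReC r2) + 2)
  (u : {fraction {poly R[i]}})
  (Hu : u = (c%:P)%:F * \prod_(t <- ts) (('X - t%:P)%:F) ^ (m t))
  (L : {fraction {poly R[i]}} -> Prop)
  (HL : is_simple_submodule theta u L) :
  forall p : {poly R[i]}, L (p%:F).
Proof.
case: HL => [[S0 Sadd Sc [Sh Se Sf]] [x0 [Lx0 x00]] _].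
set w := 3 + Num.max (ReC r1) (ReC r2).
set N := Npol c ts m.
set D := Dpol ts m.
have uD : u * D%:F = N%:F by rewrite Hu u_char.
have D0 : D != 0 by exact: prod_neq0.
have N0 : N != 0 by rewrite mulf_neq0 ?polyC_eq0 // prod_neq0.
have Lpoly : forall q x, L x -> L (q%:F * x).
  elim/poly_ind => [|q c0 IH] x Lx; first by rewrite tofrac0 mul0r.
  rewrite tofracD tofracM mulrDl -mulrA; apply: Sadd; last exact: Sc.
  apply: IH; exact: (Sh _ Lx).
have key : forall k (p : {poly R[i]}), (size p <= k)%N -> p != 0 -> L p%:F -> L 1.
  elim=> [|k IH] p szp p0 Lp.
    by move: p0; rewrite -size_poly_eq0 -leqn0 szp.
  have Lmod : forall q, L q%:F -> q %% p != 0 -> L 1.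
    move=> q Lq q0; apply: (IH (q %% p)) => //.
      by rewrite -ltnS; apply: leq_trans szp; rewrite ltn_modp.
    have -> : q %% p = q + (- (q %/ p)) * p.
      have := divp_eq q p; set qd := q %/ p; set qm := q %% p; move=> {1}->.
      by rewrite mulNr addrAC subrr add0r.
    by rewrite tofracD tofracM; apply: Sadd => //; apply: (Lpoly).
  case: (ltnP 1 (size p)) => [sp1|sp1]; last first.
    have pc := size1_polyC sp1; rewrite pc in p0 Lp.
    have : ((p`_0)^-1)%:P%:F * (p`_0)%:P%:F = 1 :> {fraction {poly R[i]}}.
      by rewrite -tofracM -polyCM mulVf ?tofrac1 // -polyC_eq0.
    by move=> <-; exact: Sc.
  set sp := p \Po ('X + (-2)%:P).
  set q1 := sp * N.
  have Lq1 : L q1%:F.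
    have -> : q1%:F = D%:F * act_e u p%:F.
      rewrite /act_e /sigmaK shiftK_poly -/sp mulrCA [D%:F * u]mulrC uD.
      by rewrite tofracM.
    by apply: (Lpoly); apply: Se.
  set P := theta%:P - ('X + 1) ^+ 2.
  set sp' := p \Po ('X + 2%:P).
  set N' := N \Po ('X + 2%:P).
  set D' := D \Po ('X + 2%:P).
  set q2 := P * sp' * D'.
  have Lq2 : L q2%:F.
    have su : sigmaKinv u = N'%:F / D'%:F by rewrite /sigmaKinv (shiftK_char _ _ _ _ D0 uD).
    have h4 : (4%:R : {fraction {poly R[i]}}) != 0.
      by rewrite -(rmorph_nat (@FracField.tofrac _)) tofrac_eq0 -polyC_natr polyC_eq0 pnatr_eq0.
    have N'0 : N'%:F != 0 by rewrite tofrac_eq0 comp_shift_neq0.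
    have D'0 : D'%:F != 0 by rewrite tofrac_eq0 comp_shift_neq0.
    have -> : q2%:F = (4%:R * N')%:F * act_f theta u p%:F.
      rewrite /act_f su /sigmaKinv shiftK_poly -/sp' -/P /q2 !tofracM.
      rewrite (rmorph_nat (@FracField.tofrac _)).
      exact: (@field_aux (Kf R) _ _ _ _ _ h4 N'0 D'0).
    exact: (Lpoly _ _ (Sf _ Lp)).
  case: (eqVneq (q1 %% p) 0) => [m1|m1]; last exact: (Lmod q1 Lq1 m1).
  case: (eqVneq (q2 %% p) 0) => [m2|m2]; last exact: (Lmod q2 Lq2 m2).
  have d1 : p %| q1 by rewrite /dvdp m1.
  have d2 : p %| q2 by rewrite /dvdp m2.
  have [rs prs] := closed_field_poly_normal p.
  have lc0 : lead_coef p != 0 by rewrite lead_coef_eq0.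
  have rootE : forall z, (p.[z] == 0) = (z \in rs).
    move=> z; rewrite prs hornerZ mulf_eq0 (negbTE lc0) /= horner_prod prodf_seq_eq0.
    apply/hasP/idP => [[t tin /=]|zin]; first by rewrite hornerXsubC subr_eq0 => /eqP ->.
    by exists z => //=; rewrite hornerXsubC subrr.
  case: rs prs rootE => [|r0 rs'] prs rootE.
    by move: sp1; rewrite prs big_nil size_scale // size_poly1.
  have [a ain amin] := exists_min (fun z => ReC z) r0 rs'.
  have [b bin bmax] := exists_min (fun z => - ReC z) r0 rs'.
  have hab : ReC a <= ReC b := amin b bin.
  have hwa : w <= ReC a.
    have : root q1 a by apply: (root_dvdp d1); rewrite /root rootE.
    rewrite /root /q1 hornerM mulf_eq0 => /orP [].
      rewrite /sp horner_shift rootE => /amin /=.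
      rewrite ReC_add ReC_m2 => h; exfalso; clear -h; lra.
    rewrite /N /Npol hornerM hornerC mulf_eq0 (negbTE Hc) /= => /eqP /prod_root /Hts.
    by case/andP.
  have hwb : ReC b < w.
    have : root q2 b by apply: (root_dvdp d2); rewrite /root rootE.
    rewrite /root /q2 !hornerM !mulf_eq0 => /orP [/orP [] |].
    - rewrite /P Hroots hornerN hornerM !hornerXsubC oppr_eq0 mulf_eq0 !subr_eq0.
      have h1 : ReC r1 <= Num.max (ReC r1) (ReC r2) by rewrite le_max lexx.
      have h2 : ReC r2 <= Num.max (ReC r1) (ReC r2) by rewrite le_max lexx orbT.
      by case/orP => /eqP ->; rewrite /w; clear -h1 h2; lra.
    - rewrite /sp' horner_shift rootE => /bmax /=.
      rewrite ReC_add ReC_2 => h; exfalso; clear -h; lra.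
    - rewrite /D' horner_shift => /eqP /prod_root /Hts.
      rewrite ReC_add ReC_2 -/w => /andP [_ h]; clear -h; lra.
  exfalso; clear -hab hwa hwb; lra.
move=> p; rewrite -[p%:F]mulr1; apply: (Lpoly).
have hr := @repr_frac _ x0.
set r := repr x0 in hr.
have dr0 : \d_r != 0 by exact: denom_ratioP.
have nr0 : \n_r != 0.
  apply/eqP => n0; apply: x00; move: hr; rewrite n0 tofrac0 => /eqP.
  by rewrite mulf_eq0 tofrac_eq0 (negbTE dr0) orbF => /eqP.
apply: (key (size \n_r) \n_r) => //.
by rewrite -hr mulrC; apply: (Lpoly).
Qed.
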